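(* Let $n\ge1$, $q\in\{2,3,\ldots\}$, $\alpha>0$, $N>n$, and for $s\ge0$ let $\mu_q(s)$ be the unique positive solution of $N\mu^q-ns\mu^{q-1}-q\alpha^q=0$. Let $b=\mu_q(0)=\alpha(q/N)^{1/q}$ and $a=n/N=\lim_{s\to\infty}\mu_q(s)/s$. Then for every $s>0$, $$\mu_q(s)<b+as.$$ In particular, if an inverse Wishart MAP has eigenvalue map $s\mapsto \frac{ns+\alpha'}{n+m'+p+1}$ with the same floor $\alpha'/(n+m'+p+1)=b$ and the same shrinkage $n/(n+m'+p+1)=a$, then each nonzero-eigenvalue-direction eigenvalue of the power inverse Wishart MAP is strictly smaller than the corresponding eigenvalue of this inverse Wishart MAP.
   Context: For $\Psi=\alpha I$ the power inverse Wishart MAP covariance estimator (prior parameters $(\alpha I,m,q)$, $N=n+p+qm+1$) has the same eigenvectors as the sample covariance $S$, and an eigenvalue $s$ of $S$ is mapped to $\mu_q(s)$; the inverse Wishart MAP (prior parameters $(\alpha' I,m')$) is $\frac{1}{n+m'+p+1}(nS+\alpha' I)$. The floor of such an eigenvalue map is its value at $s=0$ and the shrinkage is its limit of (value)/$s$ as $s\to\infty$. *)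

(* Defs.v *)
From Stdlib Require Import Reals.
Open Scope R_scope.

Definition is_mu_q (n q : nat) (alpha N s mu : R) : Prop :=
  0 < mu /\ N * mu ^ q - INR n * s * mu ^ (q - 1) - INR q * alpha ^ q = 0.

Definition floor_b (q : nat) (alpha N : R) : R :=
  alpha * Rpower (INR q / N) (1 / INR q).
Definition shrink_a (n : nat) (N : R) : R := INR n / N.

Definition iw_map (n p : nat) (m' alpha' s : R) : R :=
  (INR n * s + alpha') / (INR n + m' + INR p + 1).

(* Main.v *)
Require Import Defs.
From Stdlib Require Import Reals Lra Lia.
Open Scope R_scope.

Lemma pow_lt_S (x y : R) (k : nat) : 0 < x -> x < y -> x ^ S k < y ^ S k.
Proof.
  intros Hx Hxy. induction k as [|k IH].
  - simpl. lra.
  - change (x ^ S (S k)) with (x * x ^ S k). change (y ^ S (S k)) with (y * y ^ S k).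
    assert (0 < x ^ S k) by (apply pow_lt; lra).
    nra.
Qed.

Lemma part1 (n q : nat) (alpha N : R) :
  (1 <= n)%nat -> (2 <= q)%nat -> 0 < alpha -> INR n < N ->
  forall s mu, 0 < s -> is_mu_q n q alpha N s mu ->
     mu < floor_b q alpha N + shrink_a n N * s.
Proof.
  intros Hn Hq Ha HN s mu Hs [Hmu Heq].
  assert (Hn0 : 0 < INR n) by (apply lt_0_INR; lia).
  assert (HN0 : 0 < N) by lra.
  assert (Hq0 : 0 < INR q) by (apply lt_0_INR; lia).
  set (r := INR q / N).
  assert (Hr : 0 < r) by (unfold r; apply Rdiv_lt_0_compat; lra).
  set (t := Rpower r (1 / INR q)).
  assert (Ht : 0 < t) by (unfold t, Rpower; apply exp_pos).
  assert (Htq : t ^ q = r).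
  { rewrite <- (Rpower_pow q t Ht). unfold t. rewrite Rpower_mult.
    replace (1 / INR q * INR q) with 1 by (field; lra). apply Rpower_1; exact Hr. }
  unfold floor_b, shrink_a. fold r. fold t.
  set (b := alpha * t). set (a := INR n / N).
  assert (Hb : 0 < b) by (unfold b; nra).
  assert (Hbq : N * b ^ q = INR q * alpha ^ q).
  { unfold b. rewrite Rpow_mult_distr, Htq. unfold r. field. lra. }
  set (c := b + a * s).
  assert (Has : 0 < a * s) by (unfold a; apply Rmult_lt_0_compat; [apply Rdiv_lt_0_compat|]; lra).
  assert (Hbc : b < c) by (unfold c; lra).
  assert (HNc : N * c - INR n * s = N * b).
  { unfold c, a. field. lra. }
  destruct q as [|k]; [lia|]. destruct k as [|k]; [lia|].
  replace (S (S k) - 1)%nat with (S k) in Heq by lia.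
  destruct (Rlt_or_le mu c) as [H|H]; [exact H|exfalso].
  assert (H1 : c ^ S k <= mu ^ S k) by (apply pow_incr; lra).
  assert (H2 : b ^ S k < c ^ S k) by (apply pow_lt_S; lra).
  assert (Hcpos : 0 < c ^ S k) by (apply pow_lt; lra).
  change (mu ^ S (S k)) with (mu * mu ^ S k) in Heq.
  change (b ^ S (S k)) with (b * b ^ S k) in Hbq.
  assert (HNmu : N * b <= N * mu - INR n * s) by nra.
  assert (HNb : 0 < N * b) by nra.
  assert (mu ^ S k * (N * mu - INR n * s) >= c ^ S k * (N * b)) by nra.
  assert (c ^ S k * (N * b) > b ^ S k * (N * b)) by nra.
  nra.
Qed.

Theorem mainTheorem8 (n q : nat) (alpha N : R) :
  (1 <= n)%nat -> (2 <= q)%nat -> 0 < alpha -> INR n < N ->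
  (forall s mu, 0 < s -> is_mu_q n q alpha N s mu ->
     mu < floor_b q alpha N + shrink_a n N * s) /\
  (forall (p : nat) (m' alpha' : R),
     alpha' / (INR n + m' + INR p + 1) = floor_b q alpha N ->
     INR n / (INR n + m' + INR p + 1) = shrink_a n N ->
     forall s mu, 0 < s -> is_mu_q n q alpha N s mu ->
       mu < iw_map n p m' alpha' s).
Proof.
  intros Hn Hq Ha HN. split.
  - apply part1; assumption.
  - intros p m' alpha' H1 H2 s mu Hs Hm.
    assert (Hn0 : 0 < INR n) by (apply lt_0_INR; lia).
    set (D := INR n + m' + INR p + 1) in *.
    assert (HD : D <> 0).
    { intro E. rewrite E in H2. unfold Rdiv in H2. rewrite Rinv_0, Rmult_0_r in H2.
      unfold shrink_a in H2. assert (0 < INR n / N) by (apply Rdiv_lt_0_compat; lra). lra. }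
    unfold iw_map. fold D.
    replace ((INR n * s + alpha') / D) with (alpha' / D + INR n / D * s) by (field; exact HD).
    rewrite H1, H2. apply (part1 n q alpha N); assumption.
Qed.
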